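(* Let $(\mathcal{X},\preceq)$ be an $\omega$-chain complete partially ordered set and $\Lambda$ a set. For finite disjoint $\mathcal{I},\mathcal{O}\subseteq\Lambda$ let $\mathfrak{N}_{\mathcal{I},\mathcal{O}}$ be the set of all $\omega$-continuous functions $\mathcal{X}^{\mathcal{I}}\to\mathcal{X}^{\mathcal{O}}$, and $\mathfrak{N}$ their union. For $s\in\mathfrak{N}_{\mathcal{I},\mathcal{O}}$ let $\Gamma(s)=\{\{i,o\}\mid i\in\mathcal{I},o\in\mathcal{O}\}$ and let $\phi^s_{i,o}(\mathbf{x})$ be the least $x_i\in\mathcal{X}$ with $s(\mathbf{x}\cup\{(i,x_i)\})(o)=x_i$. Then the resulting structure $(\mathfrak{N},\lambda,\parallel,\Gamma,\gamma)$ is a functional $\Lambda$-system algebra over $\mathcal{X}$; in particular, $\mathfrak{N}$ is closed under parallel composition and $\gamma_{i,o}(s)\in\mathfrak{N}_{\mathcal{I}\setminus\{i\},\mathcal{O}\setminus\{o\}}$ for all $s\in\mathfrak{N}_{\mathcal{I},\mathcal{O}}$, $i\in\mathcal{I}$, $o\in\mathcal{O}$.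
   Context: An $\omega$-chain is a sequence $(x_n)_{n\in\mathbb{N}}$ with $x_i\preceq x_j$ for $i\le j$; an $\omega$-CPO is a poset with least element in which every $\omega$-chain has a supremum. $\mathcal{X}^{\mathcal{I}}$ (functions $\mathcal{I}\to\mathcal{X}$) is ordered componentwise. $f$ is $\omega$-continuous if for every $\omega$-chain $C$, $\sup f(C)$ exists and equals $f(\sup C)$; such least fixed points exist. Operations: $\lambda(s)=\mathcal{I}\cup\mathcal{O}$; for $s_j\in\mathfrak{N}_{\mathcal{I}_j,\mathcal{O}_j}$ with the four index sets pairwise disjoint, $(s_1\parallel s_2)(\mathbf{x})(o_j)=s_j(\mathbf{x}|_{\mathcal{I}_j})(o_j)$ for $o_j\in\mathcal{O}_j$; $\gamma_{i,o}(s)(\mathbf{x})=s(\mathbf{x}\cup\{(i,\phi^s_{i,o}(\mathbf{x}))\})|_{\mathcal{O}\setminus\{o\}}$ for $\mathbf{x}\in\mathcal{X}^{\mathcal{I}\setminus\{i\}}$. A functional $\Lambda$-system algebra over $\mathcal{X}$ is such a structure whose system set is closed under $\parallel$ and $\gamma$ and in which, for systems with disjoint interface sets, $\{i,o\}\in\Gamma(s_1\parallel s_2)\iff\{i,o\}\in\Gamma(s_j)$ for $i,o\in\lambda(s_j)$. *)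

(* Defs.v *)
From Stdlib Require Import ClassicalEpsilon List.


(** Subsets of an index set Λ are predicates; [sub I] is the index type of X^I. *)
Definition sub {L : Type} (I : L -> Prop) : Type := {l : L | I l}.

Definition finite_set {L : Type} (I : L -> Prop) : Prop :=
  exists s : list L, forall l, I l -> In l s.
Definition disjoint {L : Type} (I O : L -> Prop) : Prop :=
  forall l, I l -> O l -> False.
Definition setU {L : Type} (A B : L -> Prop) : L -> Prop := fun l => A l \/ B l.
Definition setD1 {L : Type} (A : L -> Prop) (a : L) : L -> Prop :=
  fun l => A l /\ l <> a.

Definition pw_le {A X : Type} (le : X -> X -> Prop) (f g : A -> X) : Prop :=
  forall a, le (f a) (g a).
Definition is_chain {Y : Type} (le : Y -> Y -> Prop) (c : nat -> Y) : Prop :=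
  forall m n, m <= n -> le (c m) (c n).
Definition is_sup {Y : Type} (le : Y -> Y -> Prop) (c : nat -> Y) (s : Y) : Prop :=
  (forall n, le (c n) s) /\ (forall u, (forall n, le (c n) u) -> le s u).

Definition omega_cpo {X : Type} (le : X -> X -> Prop) (bot : X) : Prop :=
  (forall x, le x x) /\
  (forall x y, le x y -> le y x -> x = y) /\
  (forall x y z, le x y -> le y z -> le x z) /\
  (forall x, le bot x) /\
  (forall c, is_chain le c -> exists s, is_sup le c s).

Definition omega_continuous {Y Z : Type} (leY : Y -> Y -> Prop) (leZ : Z -> Z -> Prop)
  (f : Y -> Z) : Prop :=
  forall c, is_chain leY c -> forall s, is_sup leY c s ->
    is_sup leZ (fun n => f (c n)) (f s).

Definition NIO {X L : Type} (le : X -> X -> Prop) (I O : L -> Prop)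
  (f : (sub I -> X) -> (sub O -> X)) : Prop :=
  finite_set I /\ finite_set O /\ disjoint I O /\
  omega_continuous (pw_le le) (pw_le le) f.

Definition lambda {L : Type} (I O : L -> Prop) : L -> Prop := setU I O.
Definition Gamma {L : Type} (I O : L -> Prop) (a b : L) : Prop :=
  exists i o, I i /\ O o /\ ((a = i /\ b = o) \/ (a = o /\ b = i)).

Definition restrict_l {X L : Type} {I1 I2 : L -> Prop} (x : sub (setU I1 I2) -> X)
  : sub I1 -> X :=
  fun p => x (exist _ (proj1_sig p) (or_introl (proj2_sig p))).
Definition restrict_r {X L : Type} {I1 I2 : L -> Prop} (x : sub (setU I1 I2) -> X)
  : sub I2 -> X :=
  fun p => x (exist _ (proj1_sig p) (or_intror (proj2_sig p))).
Definition or_right_of {A B : Prop} (h : A \/ B) (n : ~ A) : B :=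
  match h with or_introl a => False_ind B (n a) | or_intror b => b end.

Definition par {X L : Type} {I1 O1 I2 O2 : L -> Prop}
  (f1 : (sub I1 -> X) -> (sub O1 -> X)) (f2 : (sub I2 -> X) -> (sub O2 -> X))
  : (sub (setU I1 I2) -> X) -> (sub (setU O1 O2) -> X) :=
  fun x p =>
    match excluded_middle_informative (O1 (proj1_sig p)) with
    | left h => f1 (restrict_l x) (exist _ (proj1_sig p) h)
    | right h => f2 (restrict_r x) (exist _ (proj1_sig p) (or_right_of (proj2_sig p) h))
    end.

Definition extend {X L : Type} {I : L -> Prop} {i : L}
  (x : sub (setD1 I i) -> X) (xi : X) : sub I -> X :=
  fun p =>
    match excluded_middle_informative (proj1_sig p = i) with
    | left _ => xi
    | right h => x (exist _ (proj1_sig p) (conj (proj2_sig p) h))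
    end.

Definition is_fixpt {X L : Type} {I O : L -> Prop}
  (f : (sub I -> X) -> (sub O -> X)) (i o : L) (x : sub (setD1 I i) -> X) (y : X) : Prop :=
  exists ho : O o, f (extend x y) (exist _ o ho) = y.

(** phi^s_{i,o}(x): the least such fixed point (chosen by epsilon; the
    inhabitant bot is only used to make epsilon total). *)
Definition phi {X L : Type} (le : X -> X -> Prop) (bot : X) {I O : L -> Prop}
  (f : (sub I -> X) -> (sub O -> X)) (i o : L) (x : sub (setD1 I i) -> X) : X :=
  epsilon (inhabits bot)
    (fun y => is_fixpt f i o x y /\ forall z, is_fixpt f i o x z -> le y z).

Definition gamma {X L : Type} (le : X -> X -> Prop) (bot : X) {I O : L -> Prop}
  (i o : L) (f : (sub I -> X) -> (sub O -> X))
  : (sub (setD1 I i) -> X) -> (sub (setD1 O o) -> X) :=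
  fun x p => f (extend x (phi le bot f i o x)) (exist _ (proj1_sig p) (proj1 (proj2_sig p))).

Definition functional_system_algebra {X : Type} (le : X -> X -> Prop) (bot : X)
  (L : Type) : Prop :=
  (forall (I1 O1 I2 O2 : L -> Prop) f1 f2,
      NIO le I1 O1 f1 -> NIO le I2 O2 f2 ->
      disjoint (lambda I1 O1) (lambda I2 O2) ->
      NIO le (setU I1 I2) (setU O1 O2) (par f1 f2)) /\
  (forall (I O : L -> Prop) f (i o : L),
      NIO le I O f -> I i -> O o ->
      NIO le (setD1 I i) (setD1 O o) (gamma le bot i o f)) /\
  (forall (I1 O1 I2 O2 : L -> Prop) f1 f2,
      NIO le I1 O1 f1 -> NIO le I2 O2 f2 ->
      disjoint (lambda I1 O1) (lambda I2 O2) ->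
      (forall a b, lambda I1 O1 a -> lambda I1 O1 b ->
         (Gamma (setU I1 I2) (setU O1 O2) a b <-> Gamma I1 O1 a b)) /\
      (forall a b, lambda I2 O2 a -> lambda I2 O2 b ->
         (Gamma (setU I1 I2) (setU O1 O2) a b <-> Gamma I2 O2 a b))).

(* Main.v *)
Require Import Defs.
From Stdlib Require Import ClassicalEpsilon List ProofIrrelevance Lia FunctionalExtensionality.

Lemma pw_sup_iff {A X : Type} (le : X -> X -> Prop) (c : nat -> A -> X) (s : A -> X) :
  is_sup (pw_le le) c s <-> forall a, is_sup le (fun n => c n a) (s a).
Proof.
  split.
  - intros [H1 H2] a. split; [intro n; apply H1|].
    intros u Hu.
    set (s' := fun b => match excluded_middle_informative (b = a) with
                        | left _ => u | right _ => s b end).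
    assert (Hs : pw_le le s s').
    { apply H2. intros n b. unfold s'. destruct (excluded_middle_informative (b = a)).
      - subst. apply Hu.
      - apply H1. }
    specialize (Hs a). unfold s' in Hs.
    destruct (excluded_middle_informative (a = a)); [exact Hs|congruence].
  - intros H. split.
    + intros n a. apply (proj1 (H a)).
    + intros u Hu a. apply (proj2 (H a)). intro n. apply Hu.
Qed.

Lemma pw_chain {A X : Type} (le : X -> X -> Prop) (c : nat -> A -> X) :
  is_chain (pw_le le) c -> forall a, is_chain le (fun n => c n a).
Proof. intros H a m n Hmn. apply H, Hmn. Qed.

Lemma mono_of_cont {Y Z : Type} (leY : Y -> Y -> Prop) (leZ : Z -> Z -> Prop) f :
  (forall y, leY y y) -> omega_continuous leY leZ f ->
  forall x y, leY x y -> leZ (f x) (f y).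
Proof.
  intros Hr Hc x y Hxy.
  set (c := fun n => match n with 0 => x | S _ => y end).
  assert (Hch : is_chain leY c).
  { intros [|m] [|n] Hmn; simpl; auto; lia. }
  assert (Hs : is_sup leY c y).
  { split. intros [|n]; simpl; auto. intros u Hu. apply (Hu 1). }
  destruct (Hc c Hch y Hs) as [H1 _]. apply (H1 0).
Qed.

Lemma sup_unique {X : Type} (le : X -> X -> Prop)
  (Ha : forall x y, le x y -> le y x -> x = y) c a b :
  is_sup le c a -> is_sup le c b -> a = b.
Proof.
  intros [A1 A2] [B1 B2]. apply Ha; [apply A2; exact B1 | apply B2; exact A1].
Qed.

Lemma chain_of_step {X : Type} (le : X -> X -> Prop)
  (Hr : forall x, le x x) (Ht : forall x y z, le x y -> le y z -> le x z) c :
  (forall n, le (c n) (c (S n))) -> is_chain le c.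
Proof.
  intros H m n Hmn. induction Hmn; [apply Hr|]. eapply Ht; eauto.
Qed.

Lemma sup_shift {X : Type} (le : X -> X -> Prop)
  (Ht : forall x y z, le x y -> le y z -> le x z) c p :
  is_chain le c -> is_sup le c p -> is_sup le (fun n => c (S n)) p.
Proof.
  intros Hc [H1 H2]. split; [intro; apply H1|].
  intros u Hu. apply H2. intro n. apply (Ht _ (c (S n))); [apply Hc; auto|apply Hu].
Qed.

Lemma finite_setU {L : Type} (A B : L -> Prop) :
  finite_set A -> finite_set B -> finite_set (setU A B).
Proof.
  intros [s1 H1] [s2 H2]. exists (s1 ++ s2). intros l [h|h]; apply in_or_app; auto.
Qed.

Lemma finite_setD1 {L : Type} (A : L -> Prop) a :
  finite_set A -> finite_set (setD1 A a).
Proof. intros [s H]. exists s. intros l [h _]. auto. Qed.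

Theorem theorem5p6 (X : Type) (le : X -> X -> Prop) (bot : X)
  (Hcpo : omega_cpo le bot) (L : Type) :
  functional_system_algebra le bot L.
Proof.
  destruct Hcpo as (Hr & Ha & Ht & Hb & Hcomp).
  assert (Hpr : forall A (x : A -> X), pw_le le x x) by (intros A x a; apply Hr).
  split; [|split].
  -
    intros I1 O1 I2 O2 f1 f2 (F1 & G1 & D1 & C1) (F2 & G2 & D2 & C2) D.
    split; [apply finite_setU; auto|split; [apply finite_setU; auto|split]].
    + intros l [h|h] [h'|h'].
      * eapply D1; eauto.
      * apply (D l); [left|right]; auto.
      * apply (D l); [right|left]; auto.
      * eapply D2; eauto.
    + intros c Hc s Hs. apply pw_sup_iff. intro p. unfold par.
      destruct (excluded_middle_informative (O1 (proj1_sig p))) as [h|h].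
      * refine (proj1 (pw_sup_iff le _ _) (C1 (fun n => restrict_l (c n)) _ (restrict_l s) _) _).
        -- intros m n Hmn q. apply Hc, Hmn.
        -- apply pw_sup_iff. intro q. unfold restrict_l. apply (proj1 (pw_sup_iff le _ _) Hs).
      * refine (proj1 (pw_sup_iff le _ _) (C2 (fun n => restrict_r (c n)) _ (restrict_r s) _) _).
        -- intros m n Hmn q. apply Hc, Hmn.
        -- apply pw_sup_iff. intro q. unfold restrict_r. apply (proj1 (pw_sup_iff le _ _) Hs).
  -
    intros I O f i o (F & G & D & C) Hi Ho.
    split; [apply finite_setD1; auto|split; [apply finite_setD1; auto|split]].
    { intros l [h _] [h' _]. eapply D; eauto. }
    assert (Fm := mono_of_cont _ _ f (Hpr _) C).
    set (g := fun (x : sub (setD1 I i) -> X) y => f (extend x y) (exist _ o Ho)).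
    assert (Em : forall x x' y y', pw_le le x x' -> le y y' ->
                  pw_le le (@extend X L I i x y) (@extend X L I i x' y')).
    { intros x x' y y' Hx Hy p. unfold extend.
      destruct (excluded_middle_informative (proj1_sig p = i)); auto. }
    assert (gm : forall x x' y y', pw_le le x x' -> le y y' -> le (g x y) (g x' y')).
    { intros. unfold g. apply Fm, Em; auto. }
    assert (Esup : forall (c : nat -> sub (setD1 I i) -> X) (d : nat -> X) s q,
               is_sup (pw_le le) c s -> is_sup le d q ->
               is_sup (pw_le le) (fun n => @extend X L I i (c n) (d n)) (@extend X L I i s q)).
    { intros c d s q Hs Hq. apply pw_sup_iff. intro p. unfold extend.
      destruct (excluded_middle_informative (proj1_sig p = i)); auto.
      apply (proj1 (pw_sup_iff le _ _) Hs). }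
    assert (Echain : forall (c : nat -> sub (setD1 I i) -> X) (d : nat -> X),
               is_chain (pw_le le) c -> is_chain le d ->
               is_chain (pw_le le) (fun n => @extend X L I i (c n) (d n))).
    { intros c d H1 H2 m n Hmn. apply Em; auto. }
    assert (gsup : forall (c : nat -> sub (setD1 I i) -> X) (d : nat -> X) s q,
               is_chain (pw_le le) c -> is_chain le d ->
               is_sup (pw_le le) c s -> is_sup le d q ->
               is_sup le (fun n => g (c n) (d n)) (g s q)).
    { intros c d s q H1 H2 H3 H4. unfold g.
      refine (proj1 (pw_sup_iff le _ _) (C _ (Echain c d H1 H2) _ (Esup c d s q H3 H4)) _). }
    assert (lfp : forall x, exists y, g x y = y /\ forall z, le (g x z) z -> le y z).
    { intro x.
      set (it := fun n => Nat.iter n (g x) bot).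
      assert (itc : is_chain le it).
      { apply chain_of_step; auto. intro n. induction n; simpl.
        - apply Hb.
        - apply gm; auto. }
      destruct (Hcomp it itc) as [p Hp].
      exists p. split.
      - apply (sup_unique le Ha (fun n => it (S n))).
        + apply (gsup (fun _ => x) it x p); auto.
          * intros m n _. apply Hpr.
          * split; [intro; apply Hpr|]. intros u Hu. apply (Hu 0).
        + apply sup_shift; auto.
      - intros z Hz. apply (proj2 Hp). intro n. induction n; simpl.
        + apply Hb.
        + eapply Ht; [|exact Hz]. apply gm; auto. }
    assert (fixeq : forall x y, is_fixpt f i o x y <-> g x y = y).
    { intros x y. split.
      - intros [ho Hh]. unfold g. rewrite (proof_irrelevance _ Ho ho). exact Hh.
      - intro Hh. exists Ho. exact Hh. }
    assert (phis : forall x, g x (phi le bot f i o x) = phi le bot f i o x /\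
                   forall z, le (g x z) z -> le (phi le bot f i o x) z).
    { intro x. destruct (lfp x) as [y [Hy1 Hy2]].
      assert (Hs : is_fixpt f i o x (phi le bot f i o x) /\
                   forall z, is_fixpt f i o x z -> le (phi le bot f i o x) z).
      { unfold phi. apply epsilon_spec. exists y. split.
        - apply fixeq; auto.
        - intros z Hz. apply Hy2. apply fixeq in Hz. rewrite Hz. apply Hr. }
      destruct Hs as [Hs1 Hs2]. apply fixeq in Hs1.
      assert (E : phi le bot f i o x = y).
      { apply Ha.
        - apply Hs2, fixeq, Hy1.
        - apply Hy2. rewrite Hs1. apply Hr. }
      rewrite E. auto. }
    assert (phim : forall x x', pw_le le x x' ->
                   le (phi le bot f i o x) (phi le bot f i o x')).
    { intros x x' Hx. apply (proj2 (phis x)).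
      rewrite <- (proj1 (phis x')) at 2. apply gm; auto. }
    intros c Hc s Hs.
    set (d := fun n => phi le bot f i o (c n)).
    assert (dc : is_chain le d).
    { intros m n Hmn. apply phim, Hc, Hmn. }
    destruct (Hcomp d dc) as [q Hq].
    assert (Hgq : g s q = q).
    { apply (sup_unique le Ha d).
      - assert (E : d = fun n => g (c n) (d n)).
        { apply functional_extensionality_dep. intro n. unfold d.
          symmetry. apply phis. }
        rewrite E at 1. apply gsup; auto.
      - exact Hq. }
    assert (Eq : q = phi le bot f i o s).
    { apply Ha.
      - apply (proj2 Hq). intro n. apply phim. apply (proj1 Hs).
      - apply (proj2 (phis s)). rewrite Hgq. apply Hr. }
    apply pw_sup_iff. intro p. unfold gamma.
    rewrite <- Eq.
    refine (proj1 (pw_sup_iff le _ _) (C _ (Echain c d Hc dc) _ (Esup c d s q Hs Hq)) _).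
  -
    intros I1 O1 I2 O2 f1 f2 _ _ D. split.
    + intros a b Ha' Hb'. split.
      * intros (i0 & o0 & Hi & Ho & Hab).
        exists i0, o0. 
        assert (Hi1 : I1 i0 /\ O1 o0).
        { unfold disjoint, lambda, setU in *.
          destruct Hab as [[E1 E2]|[E1 E2]]; subst; destruct Hi as [Hi|Hi]; destruct Ho as [Ho|Ho];
            try (split; assumption); exfalso; firstorder. }
        destruct Hi1; auto.
      * intros (i0 & o0 & Hi & Ho & Hab). exists i0, o0. unfold setU. auto.
    + intros a b Ha' Hb'. split.
      * intros (i0 & o0 & Hi & Ho & Hab).
        exists i0, o0.
        assert (Hi1 : I2 i0 /\ O2 o0).
        { unfold disjoint, lambda, setU in *.
          destruct Hab as [[E1 E2]|[E1 E2]]; subst; destruct Hi as [Hi|Hi]; destruct Ho as [Ho|Ho];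
            try (split; assumption); exfalso; firstorder. }
        destruct Hi1; auto.
      * intros (i0 & o0 & Hi & Ho & Hab). exists i0, o0. unfold setU. auto.
Qed.
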